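(* Assume $F\in\mathbb C^{n\times n}$ is Hermitian. Define Hermitian matrices $T_k\in\mathbb C^{k\times k}$ recursively by $$T_1=\frac{1+V_1^*FV_1}{2a_1},$$ and, for $k\ge2$, $$T_k=P_k^{-*}\left(\begin{bmatrix}T_{k-1}&0\\0&2a_k\end{bmatrix}+\frac1{2a_k}Q_k^{-*}V_k^*FV_kQ_k^{-1}\right)P_k^{-1},$$ where $$Q_k=\frac{1}{-2a_k}\begin{bmatrix}D_k&0\\ \mathbf 1_{k-1}^T&1\end{bmatrix},\qquad D_k=\operatorname{diag}(\alpha_k-\alpha_1,\dots,\alpha_k-\alpha_{k-1}),$$ and $P_k^{-1}$ is the $k\times k$ matrix $$P_k^{-1}=\begin{bmatrix}\operatorname{diag}\!\Big(\frac{\alpha_1-\alpha_k}{\alpha_1+\bar\alpha_k},\dots,\frac{\alpha_{k-1}-\alpha_k}{\alpha_{k-1}+\bar\alpha_k}\Big)&0\\ \Big(\frac{-1}{\alpha_1+\bar\alpha_k},\dots,\frac{-1}{\alpha_{k-1}+\bar\alpha_k}\Big)&\frac{-1}{2a_k}\end{bmatrix}$$ (with $P_k^{-*}$ its conjugate transpose). Then for every $k\ge1$, $$\Lambda_k^*T_k+T_k\Lambda_k-V_k^*FV_k-\mathbf 1\mathbf 1^*=0,$$ equivalently $T_k(i,j)=\dfrac{1+(V_k^*FV_k)_{ij}}{\bar\alpha_i+\alpha_j}$ for all $1\le i,j\le k$. In particular, the leading $(k-1)\times(k-1)$ principal submatrix of $T_k$ equals $T_{k-1}$.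
   Context: Let $A\in\mathbb C^{n\times n}$ and $C\in\mathbb C^{1\times n}$; $M^*$ denotes the conjugate transpose. Let $\alpha_1,\alpha_2,\dots\in\mathbb C$ be pairwise distinct with $a_j:=\operatorname{Re}(\alpha_j)>0$, and such that $-A^*+\alpha_jI$ is nonsingular for all $j$. Set $$V_k=\big[(-A^*+\alpha_1I)^{-1}C^*,\dots,(-A^*+\alpha_kI)^{-1}C^*\big]\in\mathbb C^{n\times k},$$ $\Lambda_k=\operatorname{diag}(\alpha_1,\dots,\alpha_k)$, and $\mathbf 1=[1,\dots,1]^T\in\mathbb R^k$. *)

(* Defs.v *)
(* Complex numbers: an arbitrary numClosedFieldType C
   (algebraically closed field with conjugation and order on reals), which
   covers the complex numbers; everything in the statement is algebraic. *)
From HB Require Import structures.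
From mathcomp Require Import all_boot all_order all_algebra.
Set Implicit Arguments. Unset Strict Implicit. Unset Printing Implicit Defensive.
Import Order.TTheory GRing.Theory Num.Theory Num.Def.
Local Open Scope ring_scope.

Section Defs.
Variable C : numClosedFieldType.

Definition adjmx (m p : nat) (M : 'M[C]_(m, p)) : 'M[C]_(p, m) :=
  (map_mx Num.conj M)^T.

Variables (n : nat) (A : 'M[C]_n) (Cv : 'M[C]_(1, n)) (F : 'M[C]_n).
(* alpha is 0-indexed: alpha 0 = alpha_1, ..., alpha (k-1) = alpha_k *)
Variable alpha : nat -> C.

Definition re_a (j : nat) : C := 'Re (alpha j).

Definition Vmat (k : nat) : 'M[C]_(n, k) :=
  \matrix_(i < n, j < k) (invmx (- adjmx A + (alpha j)%:M) *m adjmx Cv) i ord0.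

Definition Lam (k : nat) : 'M[C]_k := diag_mx (\row_(j < k) alpha j).

(* For the step producing T of size k.+2 (paper's index k+2, new alpha = alpha k.+1):
   D = diag(alpha_new - alpha_1, ..., alpha_new - alpha_{k+1}) *)
Definition Dmat (k : nat) : 'M[C]_k.+1 :=
  diag_mx (\row_(j < k.+1) (alpha k.+1 - alpha j)).

Definition Qmat (k : nat) : 'M[C]_k.+2 :=
  castmx (addn1 _, addn1 _)
    ((- (2 * re_a k.+1))^-1 *: block_mx (Dmat k) 0 (const_mx 1) (1%:M : 'M[C]_1)).

Definition Pinv (k : nat) : 'M[C]_k.+2 :=
  castmx (addn1 _, addn1 _)
    (block_mx
       (diag_mx (\row_(j < k.+1)
          ((alpha j - alpha k.+1) / (alpha j + Num.conj (alpha k.+1)))))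
       0
       (\row_(j < k.+1) (- 1 / (alpha j + Num.conj (alpha k.+1))))
       ((- 1 / (2 * re_a k.+1))%:M : 'M[C]_1)).

(* Tmat k is the paper's T_{k+1} (size k+1) *)
Fixpoint Tmat (k : nat) : 'M[C]_k.+1 :=
  match k with
  | 0 => ((1 + (adjmx (Vmat 1) *m F *m Vmat 1) ord0 ord0) / (2 * re_a 0))%:M
  | k'.+1 =>
      adjmx (Pinv k') *m
        (castmx (addn1 _, addn1 _)
            (block_mx (Tmat k') 0 0 ((2 * re_a k'.+1)%:M : 'M[C]_1))
         + (2 * re_a k'.+1)^-1 *:
             (adjmx (invmx (Qmat k')) *m (adjmx (Vmat k'.+2) *m F *m Vmat k'.+2)
                *m invmx (Qmat k')))
        *m Pinv k'
  end.

End Defs.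

(* Main.v *)
Require Import Defs.
From HB Require Import structures.
From mathcomp Require Import all_boot all_order all_algebra ring.
Set Implicit Arguments. Unset Strict Implicit. Unset Printing Implicit Defensive.
Import Order.TTheory GRing.Theory Num.Theory Num.Def.
Local Open Scope ring_scope.

Section S.
Variable C : numClosedFieldType.
Variables (n : nat) (A : 'M[C]_n) (Cv : 'M[C]_(1, n)) (F : 'M[C]_n).
Variable alpha : nat -> C.

Lemma cD (K : numClosedFieldType) (x y : K) : (x + y)^* = x^* + y^*. Proof. exact: rmorphD. Qed.
Lemma cB (K : numClosedFieldType) (x y : K) : (x - y)^* = x^* - y^*. Proof. exact: rmorphB. Qed.
Lemma cM (K : numClosedFieldType) (x y : K) : (x * y)^* = x^* * y^*. Proof. exact: rmorphM. Qed.
Lemma cN (K : numClosedFieldType) (x : K) : (- x)^* = - x^*. Proof. exact: rmorphN. Qed.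
Lemma c1 (K : numClosedFieldType) : (1 : K)^* = 1. Proof. exact: rmorph1. Qed.
Lemma c0 (K : numClosedFieldType) : (0 : K)^* = 0. Proof. exact: rmorph0. Qed.
Lemma cV (K : numClosedFieldType) (x : K) : (x^-1)^* = (x^*)^-1. Proof. exact: fmorphV. Qed.
Lemma cK (K : numClosedFieldType) (x : K) : (x^*)^* = x. Proof. exact: conjCK. Qed.

Ltac nz := repeat (apply/andP; split); try assumption.

Lemma sparse_r k (X R : 'M[C]_k.+2) (HR : forall i j, i != j -> i != ord_max -> R i j = 0) i j :
  (X *m R) i j = X i j * R j j + (if j == ord_max then 0 else X i ord_max * R ord_max j).
Proof.
rewrite mxE (bigD1 j) //=; case: eqP => [->|/eqP hj].
  rewrite big1 ?addr0 // => l /eqP hl; rewrite HR ?mulr0 //; [exact/eqP | by apply/eqP].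
rewrite (bigD1 ord_max) 1?eq_sym //= big1 ?addr0 // => l /andP [hl1 hl2].
by rewrite HR ?mulr0.
Qed.

Lemma sparse_l k (X R : 'M[C]_k.+2) (HR : forall i j, i != j -> i != ord_max -> R i j = 0) i j :
  (adjmx R *m X) i j = (R i i)^* * X i j + (if i == ord_max then 0 else (R ord_max i)^* * X ord_max j).
Proof.
rewrite mxE (bigD1 i) //= !mxE; case: eqP => [->|/eqP hj].
  rewrite big1 ?addr0 // => l /eqP hl; rewrite !mxE HR ?conjC0 ?mul0r //; [by apply/eqP | exact/eqP].
rewrite (bigD1 ord_max) 1?eq_sym //= big1 ?addr0 ?mxE // => l /andP [hl1 hl2].
by rewrite !mxE HR ?conjC0 ?mul0r // eq_sym.
Qed.

Lemma PinvE k i j : Pinv alpha k i j =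
  if i == j then (if j == ord_max then -1 / (2 * re_a alpha k.+1)
     else (alpha j - alpha k.+1) / (alpha j + (alpha k.+1)^*))
  else if i == ord_max then -1 / (alpha j + (alpha k.+1)^*) else 0.
Proof.
rewrite /Pinv castmxE /block_mx !mxE.
case: splitP => i' /= Hi; rewrite !mxE; case: splitP => j' /= Hj; rewrite !mxE;
  rewrite -[i == j]val_eqE -[j == ord_max]val_eqE -[i == ord_max]val_eqE /= ?Hi ?Hj.
- rewrite (ltn_eqF (ltn_ord j')) (ltn_eqF (ltn_ord i')) -val_eqE /=.
  case: eqP => [e|_]; last by rewrite mulr0n.
  by rewrite mulr1n (val_inj e).
- by rewrite (ord1 j') addn0 (ltn_eqF (ltn_ord i')).
- by rewrite (ord1 i') addn0 eqxx [k.+1 == _]eq_sym (ltn_eqF (ltn_ord j')).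
- by rewrite (ord1 i') (ord1 j') addn0 !eqxx mulr1n.
Qed.

Hypothesis Halpha_inj : injective alpha.
Hypothesis Halpha_re : forall j, 0 < 'Re (alpha j).

Lemma two_re j : 2 * re_a alpha j = alpha j + (alpha j)^*.
Proof.
rewrite /re_a ReE mulrC -mulrA mulVf ?mulr1 //.
by rewrite pnatr_eq0.
Qed.

Lemma re_neq0 j : alpha j + (alpha j)^* != 0.
Proof.
rewrite -two_re mulf_neq0 ?pnatr_eq0 //.
by have := Halpha_re j; rewrite /re_a lt0r => /andP [].
Qed.

Lemma sum_neq0 i j : (alpha i)^* + alpha j != 0.
Proof.
apply/eqP => h.
have := congr1 (@Re C) h.
rewrite raddfD /= Re_conj raddf0 => e.
have := addr_gt0 (Halpha_re i) (Halpha_re j).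
by rewrite e ltxx.
Qed.

Lemma sum_neq0' i j : alpha i + (alpha j)^* != 0.
Proof. by rewrite addrC sum_neq0. Qed.

Lemma diff_neq0 i j : i != j -> alpha i - alpha j != 0.
Proof. by rewrite subr_eq0 (inj_eq Halpha_inj). Qed.

Lemma QE k i j : Qmat alpha k i j =
  (- (2 * re_a alpha k.+1))^-1 * (if i == j then (if j == ord_max then 1
     else alpha k.+1 - alpha j) else if i == ord_max then 1 else 0).
Proof.
rewrite /Qmat castmxE /block_mx !mxE; congr (_ * _).
case: splitP => i' /= Hi; rewrite !mxE; case: splitP => j' /= Hj; rewrite !mxE;
  rewrite -[i == j]val_eqE -[j == ord_max]val_eqE -[i == ord_max]val_eqE /= ?Hi ?Hj.
- rewrite (ltn_eqF (ltn_ord j')) (ltn_eqF (ltn_ord i')) -val_eqE /=.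
  case: eqP => [e|_]; last by rewrite mulr0n.
  by rewrite mulr1n (val_inj e).
- by rewrite (ord1 j') addn0 (ltn_eqF (ltn_ord i')).
- by rewrite (ord1 i') addn0 eqxx [k.+1 == _]eq_sym (ltn_eqF (ltn_ord j')).
- by rewrite (ord1 i') (ord1 j') addn0 !eqxx mulr1n.
Qed.

Definition Wm k : 'M[C]_k.+2 := \matrix_(i, j)
  (if i == j then (if j == ord_max then - (2 * re_a alpha k.+1)
     else - (2 * re_a alpha k.+1) / (alpha k.+1 - alpha j))
   else if i == ord_max then (2 * re_a alpha k.+1) / (alpha k.+1 - alpha j) else 0).

Lemma Wm0 k i j : i != j -> i != ord_max -> Wm k i j = 0.
Proof. by move=> h1 h2; rewrite mxE (negbTE h1) (negbTE h2). Qed.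

Lemma Pinv0 k i j : i != j -> i != ord_max -> Pinv alpha k i j = 0.
Proof. by move=> h1 h2; rewrite PinvE (negbTE h1) (negbTE h2). Qed.

Lemma QW k : Qmat alpha k *m Wm k = 1%:M.
Proof.
apply/matrixP => i j; rewrite sparse_r; last exact: Wm0.
rewrite !QE !mxE.
have hs := re_neq0 k.+1; rewrite two_re.
have hsn : - (alpha k.+1 + (alpha k.+1)^*) != 0 by rewrite oppr_eq0.
case: (eqVneq j ord_max) => [e|hj].
  rewrite ?e ?eqxx; case: (eqVneq i ord_max) => [e2|hi].
    by rewrite ?e2 ?eqxx mulr1n; field.
  by rewrite ?(negbTE hi) mulr0 mul0r addr0.
have hd : alpha k.+1 - alpha j != 0.
  apply: diff_neq0; apply/eqP => e; move: hj; rewrite -val_eqE /= -e eqxx //.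
rewrite ?(negbTE hj) ?eqxx ?[ord_max == j]eq_sym ?(negbTE hj).
case: (eqVneq i j) => [e|hij].
  rewrite ?e ?(negbTE hj) ?eqxx ?mulr1n; field; nz.
rewrite ?(negbTE hij) ?mulr0n; case: (eqVneq i ord_max) => [e|hi].
  rewrite ?e ?eqxx; field; nz.
by rewrite ?(negbTE hi) !mulr0 !mul0r addr0.
Qed.

Lemma invQ k : invmx (Qmat alpha k) = Wm k.
Proof.
have [hu _] := mulmx1_unit (QW k).
by rewrite -[invmx _]mulmx1 -(QW k) mulmxA mulVmx ?mul1mx.
Qed.

Definition cauchy m (G : 'M[C]_m) : 'M[C]_m :=
  \matrix_(i, j) ((1 + G i j) / ((alpha i)^* + alpha j)).
Definition ulsub k (G : 'M[C]_k.+2) : 'M[C]_k.+1 :=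
  \matrix_(i, j) G (widen_ord (leqnSn _) i) (widen_ord (leqnSn _) j).

Lemma XE k (G : 'M[C]_k.+2) i j :
  (castmx (addn1 _, addn1 _) (block_mx (cauchy (ulsub G)) 0 0
     ((2 * re_a alpha k.+1)%:M : 'M_1)) : 'M_k.+2) i j =
  if i == ord_max then (if j == ord_max then 2 * re_a alpha k.+1 else 0)
  else if j == ord_max then 0 else (1 + G i j) / ((alpha i)^* + alpha j).
Proof.
rewrite castmxE /block_mx !mxE.
case: splitP => i' /= Hi; rewrite !mxE; case: splitP => j' /= Hj; rewrite !mxE;
  rewrite -[j == ord_max]val_eqE -[i == ord_max]val_eqE /= ?Hi ?Hj.
- rewrite (ltn_eqF (ltn_ord j')) (ltn_eqF (ltn_ord i')).
  have -> : widen_ord (leqnSn k.+1) i' = i by apply/val_inj; rewrite /= Hi.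
  by have -> : widen_ord (leqnSn k.+1) j' = j by apply/val_inj; rewrite /= Hj.
- by rewrite (ord1 j') addn0 (ltn_eqF (ltn_ord i')) eqxx.
- by rewrite (ord1 i') addn0 eqxx (ltn_eqF (ltn_ord j')).
- by rewrite (ord1 i') (ord1 j') addn0 !eqxx mulr1n.
Qed.

Lemma ME m (X Y : 'M[C]_m) c p q : (X + c *: Y) p q = X p q + c * Y p q.
Proof. by rewrite !mxE. Qed.

Lemma step k (G : 'M[C]_k.+2) :
  adjmx (Pinv alpha k) *m
    (castmx (addn1 _, addn1 _) (block_mx (cauchy (ulsub G)) 0 0
        ((2 * re_a alpha k.+1)%:M : 'M_1))
     + (2 * re_a alpha k.+1)^-1 *: (adjmx (Wm k) *m G *m Wm k))
  *m Pinv alpha k = cauchy G.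
Proof.
apply/matrixP => i j.
set X := castmx _ _.
rewrite (sparse_r _ (@Pinv0 k)) !(sparse_l _ (@Pinv0 k)).
rewrite !ME /X !XE.
rewrite !(sparse_r _ (@Wm0 k)) !(sparse_l _ (@Wm0 k)).
rewrite !PinvE /Wm !mxE !eqxx.
have hs := re_neq0 k.+1.
have hs2 := sum_neq0 k.+1 k.+1.
rewrite !two_re.
have nzd : forall (p : 'I_k.+2), p != ord_max -> alpha k.+1 - alpha p != 0.
  move=> p hp; apply: diff_neq0; apply/eqP => e; move: hp; rewrite -val_eqE /= -e eqxx //.
case: (eqVneq i ord_max) => [->|hi]; case: (eqVneq j ord_max) => [->|hj];
  rewrite ?eqxx ?(negbTE hi) ?(negbTE hj) ?[ord_max == i]eq_sym ?[ord_max == j]eq_sym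
    ?(negbTE hi) ?(negbTE hj) /=;
  rewrite ?(cD, cB, cM, cN, c1, c0, cV, cK).
- field; nz.
- have h1 := nzd j hj; have h2 := sum_neq0' j k.+1; have h3 := sum_neq0 k.+1 j.
  field; nz.
- have h1 := nzd i hi; have h1c : (alpha k.+1)^* - (alpha i)^* != 0 by rewrite -cB conjC_eq0.
  have h2 := sum_neq0' i k.+1; have h3 := sum_neq0 i k.+1.
  field; nz.
- have h1 := nzd i hi; have h1c : (alpha k.+1)^* - (alpha i)^* != 0 by rewrite -cB conjC_eq0.
  have h2 := sum_neq0' i k.+1; have h3 := sum_neq0 i k.+1.
  have h4 := nzd j hj; have h5 := sum_neq0' j k.+1; have h6 := sum_neq0 k.+1 j.
  have h7 := sum_neq0 i j.
  field; nz.
Qed.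

Definition Gm k : 'M[C]_k.+1 :=
  adjmx (Vmat A Cv alpha k.+1) *m F *m Vmat A Cv alpha k.+1.

Lemma Gm_widen k i j :
  Gm k.+1 (widen_ord (leqnSn _) i) (widen_ord (leqnSn _) j) = Gm k i j.
Proof.
rewrite /Gm !mxE; apply: eq_bigr => l _; rewrite !mxE; congr (_ * _).
by apply: eq_bigr => p _; rewrite !mxE.
Qed.

Lemma ulsub_Gm k : ulsub (Gm k.+1) = Gm k.
Proof. by apply/matrixP => i j; rewrite mxE Gm_widen. Qed.

Lemma Tmat_cauchy k : Tmat A Cv F alpha k = cauchy (Gm k).
Proof.
elim: k => [|k IH].
  apply/matrixP => i j.
  rewrite (ord1 i) (ord1 j) /= !mxE /= two_re.
  by rewrite mulr1n [alpha 0 + _]addrC.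
rewrite /= IH -ulsub_Gm invQ.
exact: step.
Qed.

Lemma lam_l m (S : 'M[C]_m) i j : (adjmx (Lam alpha m) *m S) i j = (alpha i)^* * S i j.
Proof.
rewrite mxE (bigD1 i) //= big1 ?addr0; first by rewrite !mxE eqxx mulr1n.
move=> l hl; rewrite !mxE.
rewrite (negbTE hl) mulr0n c0 mul0r //.
Qed.

Lemma lam_r m (S : 'M[C]_m) i j : (S *m Lam alpha m) i j = S i j * alpha j.
Proof.
rewrite mxE (bigD1 j) //= big1 ?addr0; first by rewrite !mxE eqxx mulr1n.
move=> l hl; rewrite !mxE (negbTE hl) mulr0n mulr0 //.
Qed.

Lemma ent4 m (P Q R : 'M[C]_m) i j :
  (P + Q - R - const_mx 1) i j = P i j + Q i j - R i j - 1.
Proof. by rewrite !mxE. Qed.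

Lemma main1 k :
    adjmx (Lam alpha k.+1) *m Tmat A Cv F alpha k
      + Tmat A Cv F alpha k *m Lam alpha k.+1
      - adjmx (Vmat A Cv alpha k.+1) *m F *m Vmat A Cv alpha k.+1
      - const_mx 1 = 0.
Proof.
rewrite Tmat_cauchy -/(Gm k).
apply/matrixP => i j; rewrite ent4 lam_l lam_r /cauchy !mxE.
have h := sum_neq0 i j.
by field.
Qed.

Lemma main2 k : (\matrix_(i < k.+1, j < k.+1)
          Tmat A Cv F alpha k.+1 (widen_ord (leqnSn k.+1) i) (widen_ord (leqnSn k.+1) j))
       = Tmat A Cv F alpha k.
Proof.
rewrite !Tmat_cauchy; apply/matrixP => i j.
rewrite [LHS]mxE /cauchy [LHS]mxE [RHS]mxE Gm_widen //.
Qed.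
End S.

Unset Implicit Arguments.
Set Strict Implicit.

Theorem proposition6p1 (C : numClosedFieldType) (n : nat)
  (A : 'M[C]_n) (Cv : 'M[C]_(1, n)) (F : 'M[C]_n) (alpha : nat -> C)
  (Halpha_inj : injective alpha)
  (Halpha_re : forall j, 0 < 'Re (alpha j))
  (Hunit : forall j, (- adjmx A + (alpha j)%:M) \in unitmx)
  (Fherm : adjmx F = F) :
  forall k : nat,
    adjmx (Lam alpha k.+1) *m Tmat A Cv F alpha k
      + Tmat A Cv F alpha k *m Lam alpha k.+1
      - adjmx (Vmat A Cv alpha k.+1) *m F *m Vmat A Cv alpha k.+1
      - const_mx 1 = 0
    /\ (\matrix_(i < k.+1, j < k.+1)
          Tmat A Cv F alpha k.+1 (widen_ord (leqnSn k.+1) i) (widen_ord (leqnSn k.+1) j))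
       = Tmat A Cv F alpha k.
Proof.
move=> k; split; [exact: main1 | exact: main2].
Qed.
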